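(* For $f|N$ with $(f,N/f)\mid\frac{N}{N^*}$, $q_1 | \frac{N}{f}$, $q_2 | f$, and $\chi_i$ primitive modulo $q_i$ satisfying $\chi_1 \overline{\chi_2} \sim \psi$, let \begin{equation*} D_{\chi_1, \chi_2,f}(z,s, \psi) = \sum^{*}_{u \bmod{(f, N/f)}} \chi_1(-u) E_{\frac{1}{uf}}(z,s, \psi), \end{equation*} where the sum is over representatives $u$ of $(\mathbb Z/(f,N/f)\mathbb Z)^*$ chosen coprime to $N$. Then, with $s=1/2+it$, the functions $D_{\chi_1, \chi_2, f}(z,s,\psi)$ form an orthogonal basis for $\mathcal{E}_{t,\psi}(N)$.
   Context: Let $N\ge1$, $k\in\mathbb Z$, $\psi$ a Dirichlet character modulo $N$ with $\psi(-1)=(-1)^k$, induced by a primitive character of conductor $N^*$. For $\gamma=\begin{pmatrix}a&b\\c&d\end{pmatrix}$ put $j(\gamma,z)=\frac{cz+d}{|cz+d|}$ and $\psi(\gamma)=\psi(d)$. For a cusp $\mathfrak a$ of $\Gamma=\Gamma_0(N)$ with scaling matrix $\sigma_{\mathfrak a}$ which is singular for $\psi$ (i.e. $\psi(\sigma_{\mathfrak a}\begin{pmatrix}1&1\\0&1\end{pmatrix}\sigma_{\mathfrak a}^{-1})=1$), $E_{\mathfrak a}(z,s,\psi)=\sum_{\gamma\in\Gamma_{\mathfrak a}\backslash\Gamma}\overline{\psi}(\gamma)j(\sigma_{\mathfrak a}^{-1}\gamma,z)^{-k}(\mathrm{Im}\,\sigma_{\mathfrak a}^{-1}\gamma z)^s$.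 The cusp $\frac{1}{uf}$ ($f|N$, $(u,N)=1$) is singular for $\psi$ iff $(f,N/f)\mid N/N^*$. $\chi_1\overline{\chi_2}\sim\psi$ means both are induced by the same primitive character; the principal character modulo 1 counts as primitive. $\mathcal{E}_{t,\psi}(N)=\mathrm{span}\{E_{\mathfrak a}(z,1/2+it,\psi):\mathfrak a \text{ singular for }\psi\}$, equipped with the formal inner product defined by $\frac{1}{4\pi}\langle E_{\mathfrak a}(\cdot,1/2+it,\psi),E_{\mathfrak b}(\cdot,1/2+it,\psi)\rangle_{\mathrm{Eis}}=\delta_{\mathfrak a\mathfrak b}$ (for inequivalent singular cusps), extended bilinearly; this is well defined at least for $t\neq0$, where the $E_{\mathfrak a}$ are linearly independent. *)

(* Defs.v *)
From mathcomp Require Import all_boot all_order all_algebra all_field.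
Set Implicit Arguments. Unset Strict Implicit. Unset Printing Implicit Defensive.
Import Order.TTheory GRing.Theory Num.Theory.
Local Open Scope ring_scope.

Definition is_dchar (q : nat) (chi : int -> algC) : Prop :=
  [/\ chi 1 = 1,
      (forall m n : int, chi (m * n) = chi m * chi n),
      (forall n : int, chi (n + q%:Z) = chi n) &
      (forall n : int, (chi n != 0) = coprimez n q%:Z)].

Definition primitive_dchar (q : nat) (chi : int -> algC) : Prop :=
  is_dchar q chi /\
  forall d : nat, (d %| q)%N -> (d < q)%N ->
    ~ (forall n : int, coprimez n q%:Z -> (n == 1 %[mod d%:Z])%Z -> chi n = 1).

Definition induced_by (N : nat) (chi chi0 : int -> algC) : Prop :=
  forall n : int, coprimez n N%:Z -> chi n = chi0 n.

(* chi1 * conj(chi2) ~ psi : both induced by the same primitive character. *)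
Definition sim_char (q1 q2 N : nat) (chi1 chi2 psi : int -> algC) : Prop :=
  exists (q0 : nat) (chi0 : int -> algC),
    [/\ primitive_dchar q0 chi0,
        induced_by (q1 * q2) (fun n => chi1 n * (chi2 n)^*) chi0 &
        induced_by N psi chi0].

(* Cusps: a pair (a, c) of coprime integers represents the cusp a/c of
   P^1(Q) (infinity = (1,0)).  Gamma_0(N) acts by linear fractional maps. *)
Definition in_Gamma0 (N : nat) (al be ga de : int) : Prop :=
  al * de - be * ga = 1 /\ (N%:Z %| ga)%Z.

Definition cusp_equiv (N : nat) (x y : int * int) : Prop :=
  exists al be ga de : int, in_Gamma0 N al be ga de /\
    y = (al * x.1 + be * x.2, ga * x.1 + de * x.2).

(* The cusp a/c is singular for psi: psi(sigma_a T sigma_a^-1) = 1.  The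
   matrix sigma_a T sigma_a^-1 is the generator of the (trace 2, parabolic)
   stabiliser of a in Gamma_0(N); since gamma |-> psi(d) is a character of
   Gamma_0(N), this is equivalent to psi(gamma) = 1 for every gamma in
   Gamma_0(N) fixing a with trace 2. *)
Definition singular_cusp (N : nat) (psi : int -> algC) (x : int * int) : Prop :=
  forall al be ga de : int, in_Gamma0 N al be ga de ->
    al + de = 2 ->
    (al * x.1 + be * x.2) * x.2 = (ga * x.1 + de * x.2) * x.1 ->
    psi de = 1.

Definition admissible (N Nstar : nat) (psi : int -> algC)
    (x : nat * (int -> algC) * (int -> algC)) : Prop :=
  let: (f, chi1, chi2) := x in
  [/\ (0 < f)%N, (f %| N)%N, (gcdn f (N %/ f) %| N %/ Nstar)%N &
      exists q1 q2 : nat,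
        [/\ (q1 %| N %/ f)%N, (q2 %| f)%N, primitive_dchar q1 chi1,
            primitive_dchar q2 chi2 & sim_char q1 q2 N chi1 chi2 psi]].

Definition reps_ok (N g : nat) (s : seq int) : Prop :=
  [/\ (forall u, u \in s -> coprimez u N%:Z),
      uniq [seq (u %% g%:Z)%Z | u <- s] &
      (forall x : int, coprimez x g%:Z ->
         exists2 u, u \in s & (u == x %[mod g%:Z])%Z)].

Definition Dser (V : lmodType algC) (E : int * int -> V) (R : nat -> seq int)
    (x : nat * (int -> algC) * (int -> algC)) : V :=
  let: (f, chi1, _) := x in
  \sum_(u <- R f) chi1 (- u) *: E (1, u * f%:Z).

Definition in_span (V : lmodType algC) (S : V -> Prop) (v : V) : Prop :=
  exists l : seq (algC * V),
    (forall p, p \in l -> S p.2) /\ v = \sum_(p <- l) p.1 *: p.2.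

(* Main.v *)
Require Import Defs.
From mathcomp Require Import all_boot all_order all_algebra all_field.
From mathcomp Require Import all_fingroup all_solvable all_character.
From mathcomp Require Import zify ring.
From Stdlib Require Import Classical FunctionalExtensionality.
Set Implicit Arguments. Unset Strict Implicit. Unset Printing Implicit Defensive.
Import Order.TTheory GRing.Theory Num.Theory.
Local Open Scope ring_scope.

Lemma coprimez_congr (m a b : int) :
  coprimez a m -> (m %| a - b)%Z -> coprimez b m.
Proof.
move=> ca /dvdzP [q hq].
have eb : b = (- q) * m + a by rewrite mulNr -hq; ring.
by rewrite /coprimez gcdzC eb gcdzMDl gcdzC.
Qed.

Lemma dvdz_subC (m a b : int) : (m %| a - b)%Z = (m %| b - a)%Z.
Proof. by rewrite -rpredN opprB. Qed.

Lemma dvdz_sub_trans (m a b c : int) :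
  (m %| a - b)%Z -> (m %| b - c)%Z -> (m %| a - c)%Z.
Proof. move=> h1 h2; have -> : a - c = (a - b) + (b - c) by ring. exact: rpredD. Qed.

Lemma dvdz_trans_sub (d m a b : int) : (d %| m)%Z -> (m %| a - b)%Z -> (d %| a - b)%Z.
Proof. exact: dvdz_trans. Qed.

(* adjusting a residue to be coprime to N *)
Definition adj (N : nat) (a : int) : nat :=
  \prod_(p <- primes N | ~~ (p %| `|a|)%N) p.

Lemma adjP (N L : nat) (a : int) : (0 < N)%N -> coprimez a L ->
  coprimez (a + L%:Z * (adj N a)%:Z) N.
Proof.
move=> N0 caL.
set b := a + _.
rewrite /coprimez /gcdz /=.
apply/eqP; apply: contraTeq isT => hg.
set d := gcdn `|b| N in hg.
have d0 : (0 < d)%N by rewrite gcdn_gt0 N0 orbT.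
have d1 : (1 < d)%N by lia.
have pp := pdiv_prime d1.
set p := pdiv d in pp.
have pd : (p %| d)%N := pdiv_dvd d.
have pN : (p %| N)%N by apply: dvdn_trans pd (dvdn_gcdr _ _).
have pb : (p %:Z %| b)%Z by rewrite dvdzE /=; apply: dvdn_trans pd (dvdn_gcdl _ _).
have pprim : p \in primes N by rewrite mem_primes pp N0 pN.
case pa: (p %| `|a|)%N.
-
  have pL : ~~ (p %| L)%N.
    apply/negP => pL; move: caL; rewrite /coprimez /gcdz /= => /eqP [h].
    have : (p %| gcdn `|a| L)%N by rewrite dvdn_gcd pa pL.
    by rewrite h dvdn1 => /eqP p1; move: pp; rewrite p1.
  have padj : ~~ (p %| adj N a)%N.
    rewrite /adj Euclid_dvd_prod // big1_seq // => q /andP [qa qin].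
    apply/negP => pq.
    have qp : prime q by move: qin; rewrite mem_primes => /and3P [].
    have := pq; rewrite dvdn_prime2 // => /eqP epq.
    by move: qa; rewrite -epq pa.
  have : (p%:Z %| L%:Z * (adj N a)%:Z)%Z.
    have -> : L%:Z * (adj N a)%:Z = b - a by rewrite /b; ring.
    apply: rpredB => //; by rewrite dvdzE.
  by rewrite dvdzE abszM /= Euclid_dvdM // (negbTE pL) (negbTE padj).
- have padj : (p %| adj N a)%N.
    rewrite /adj -big_filter (bigD1_seq p) /=.
    - exact: dvdn_mulr.
    - by rewrite mem_filter pa pprim.
    - exact/filter_uniq/primes_uniq.
  have : (p%:Z %| a)%Z.
    have -> : a = b - L%:Z * (adj N a)%:Z by rewrite /b; ring.
    apply: rpredB => //; apply: dvdz_mull; by rewrite dvdzE.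
  by rewrite dvdzE /= pa.
Qed.

Lemma crt_gcd (n m a b : int) : (gcdz n m %| a - b)%Z ->
  exists k, (n %| k - a)%Z /\ (m %| k - b)%Z.
Proof.
case: (Bezoutz n m) => u [v huv] /dvdzP [t ht].
exists (a - u * n * t); split.
- have -> : a - u * n * t - a = (- (u * t)) * n by ring.
  exact: dvdz_mull (dvdzz _).
- have -> : a - u * n * t - b = (v * t) * m.
    have : a - b = (u * n + v * m) * t by rewrite huv mulrC.
    move=> h; have -> : a - u * n * t - b = (a - b) - u * n * t by ring.
    rewrite h; ring.
  exact: dvdz_mull (dvdzz _).
Qed.

Section Dchar.
Variables (q : nat) (chi : int -> algC).
Hypothesis hc : is_dchar q chi.

Lemma dchar1 : chi 1 = 1. Proof. by case: hc. Qed.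
Lemma dcharM m n : chi (m * n) = chi m * chi n. Proof. by case: hc. Qed.
Lemma dcharD n : chi (n + q%:Z) = chi n. Proof. by case: hc. Qed.
Lemma dchar_neq0 n : (chi n != 0) = coprimez n q%:Z. Proof. by case: hc. Qed.
Lemma dchar0 n : ~~ coprimez n q%:Z -> chi n = 0.
Proof. by rewrite -dchar_neq0 negbK => /eqP. Qed.

Lemma dchar_perN (n : int) (k : nat) : chi (n + q%:Z * k%:Z) = chi n.
Proof.
elim: k => [|k IH]; first by rewrite mulr0 addr0.
have -> : n + q%:Z * k.+1%:Z = (n + q%:Z * k%:Z) + q%:Z by rewrite -addn1 PoszD; ring.
by rewrite dcharD.
Qed.

Lemma dchar_per (n t : int) : chi (n + q%:Z * t) = chi n.
Proof.
case: t => k; first exact: dchar_perN.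
rewrite -(dchar_perN (n + q%:Z * Negz k) k.+1); congr chi.
rewrite NegzE; ring.
Qed.

Lemma dchar_mod (a b : int) : (q%:Z %| a - b)%Z -> chi a = chi b.
Proof.
move=> /dvdzP [t ht].
have -> : a = b + q%:Z * t by rewrite mulrC -ht; ring.
exact: dchar_per.
Qed.

Lemma dcharX n k : chi (n ^+ k) = chi n ^+ k.
Proof. elim: k => [|k IH]; first by rewrite !expr0 dchar1. by rewrite !exprS dcharM IH. Qed.

Lemma PoszX (a k : nat) : Posz (a ^ k)%N = (Posz a) ^+ k.
Proof. elim: k => [|k IH]; first by rewrite expn0 expr0. by rewrite expnS exprS PoszM IH. Qed.

Lemma dchar_norm n : (0 < q)%N -> coprimez n q%:Z -> chi n * (chi n)^* = 1.
Proof.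
move=> q0 cn.
set k := totient q.
have k0 : (0 < k)%N by rewrite totient_gt0.
have ca : coprime `|n|%N q by move: cn; rewrite coprimezE.
have e := Euler_exp_totient ca.
have h1 : chi (Posz `|n|%N) ^+ k = 1.
  rewrite -dcharX -PoszX -dchar1; apply: dchar_mod.
  rewrite -eqz_mod_dvd !modz_nat; apply/eqP; congr Posz; exact: e.
have hs : chi ((-1) ^+ (n < 0)%R) ^+ 2 = 1.
  by rewrite -dcharX -exprM mulnC exprM sqrrN expr1n dchar1.
have hz : chi n ^+ (2 * k) = 1.
  rewrite {1}[n]intEsign dcharM exprMn exprM hs expr1n mul1r mulnC exprM h1 expr1n //.
have : `|chi n| ^+ (2 * k) == 1 by rewrite -normrX hz normr1.
rewrite pexpr_eq1 ?muln_gt0 // => /eqP hn.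
by rewrite -normCK hn expr1n.
Qed.

Lemma dchar_conj n : (0 < q)%N -> coprimez n q%:Z -> (chi n)^* = (chi n)^-1.
Proof.
move=> q0 cn; have h := dchar_norm q0 cn.
have nz : chi n != 0 by rewrite dchar_neq0.
by apply: (mulfI nz); rewrite h mulfV.
Qed.

End Dchar.

Lemma coprimez1 (m : int) : coprimez 1 m.
Proof. by rewrite /coprimez gcd1z. Qed.

Lemma coprimez_of1 (m k : int) : (m %| k - 1)%Z -> coprimez k m.
Proof. move=> h; apply: (coprimez_congr (coprimez1 m)); by rewrite dvdz_subC. Qed.

Lemma prim_dvd (q m N : nat) chi : (0 < q)%N -> (0 < N)%N -> primitive_dchar q chi ->
  (forall n, coprimez n N%:Z -> (m%:Z %| n - 1)%Z -> chi n = 1) -> (q %| m)%N.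
Proof.
move=> q0 N0 [hc hp] htriv.
set d := gcdn q m.
have dq : (d %| q)%N by apply: dvdn_gcdl.
case: (ltnP d q) => [lt|ge].
- exfalso; apply: (hp d dq lt) => n cn; rewrite eqz_mod_dvd => hn.
  have [k [hk1 hk2]] := crt_gcd (n := q%:Z) (m := m%:Z) hn.
  have ckq : coprimez k q%:Z by apply: (coprimez_congr cn); rewrite dvdz_subC.
  have ckm : coprimez k m%:Z by apply: coprimez_of1.
  have ck : coprimez k (q * m)%N%:Z by rewrite PoszM coprimezMr ckq ckm.
  have := adjP N0 ck; set k' := k + _ => ck'.
  have -> : chi n = chi k'.
    apply: (dchar_mod hc); have -> : n - k' = - (k - n) - q%:Z * (m%:Z * (adj N k)%:Z).
      by rewrite /k' PoszM; ring.
    apply: rpredB; first by rewrite rpredN.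
    exact: dvdz_mulr (dvdzz _).
  apply: htriv => //.
  have -> : k' - 1 = (k - 1) + m%:Z * (q%:Z * (adj N k)%:Z) by rewrite /k' PoszM; ring.
  apply: rpredD => //; exact: dvdz_mulr (dvdzz _).
- have : d = q by apply/eqP; rewrite eqn_leq ge dvdn_leq.
  by move=> <-; apply: dvdn_gcdr.
Qed.

Lemma prim_gt0 N q : (0 < N)%N -> (q %| N)%N -> (0 < q)%N.
Proof. move=> N0 qN; case: q qN => // /[!dvd0n] /eqP N00; by rewrite N00 in N0. Qed.

Lemma prim_unique (N q q' : nat) chi chi' : (0 < N)%N -> (q %| N)%N -> (q' %| N)%N ->
  primitive_dchar q chi -> primitive_dchar q' chi' ->
  (forall n, coprimez n N%:Z -> chi n = chi' n) ->
  q = q' /\ forall n, chi n = chi' n.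
Proof.
move=> N0 qN q'N hp hp' heq.
have q0 := prim_gt0 N0 qN; have q'0 := prim_gt0 N0 q'N.
have hc := hp.1; have hc' := hp'.1.
have d1 : (q %| q')%N.
  apply: (prim_dvd q0 N0 hp) => n cn hn.
  by rewrite heq // -(dchar1 hc'); apply: (dchar_mod hc').
have d2 : (q' %| q)%N.
  apply: (prim_dvd q'0 N0 hp') => n cn hn.
  by rewrite -heq // -(dchar1 hc); apply: (dchar_mod hc).
have eq : q = q' by apply/eqP; rewrite eqn_dvd d1 d2.
split => // n.
case cn: (coprimez n q%:Z).
- have := adjP (L := q) N0 cn; set n' := n + _ => cn'.
  have e1 : (q%:Z %| n' - n)%Z.
    have -> : n' - n = q%:Z * (adj N n)%:Z by rewrite /n'; ring.
    exact: dvdz_mulr (dvdzz _).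
  rewrite -(dchar_mod hc e1) heq //; apply: (dchar_mod hc'); by rewrite -eq.
- rewrite (dchar0 hc) ?cn // (dchar0 hc') //; by rewrite -eq cn.
Qed.

Section Induce.
Variables (Q : nat) (phi : int -> algC).
Hypothesis hQ : (0 < Q)%N.
Hypothesis hphi : is_dchar Q phi.

Definition triv (d : nat) := forall n, coprimez n Q%:Z -> (d%:Z %| n - 1)%Z -> phi n = 1.

Lemma triv_congr d : (d %| Q)%N -> triv d -> forall a b, coprimez a Q%:Z -> coprimez b Q%:Z ->
  (d%:Z %| a - b)%Z -> phi a = phi b.
Proof.
move=> dQ ht a b ca cb hab.
have /coprimezP [[u v] /= huv] := cb.
have cu : coprimez u Q%:Z by apply/coprimezP; exists (b, v); rewrite /= mulrC.
have dQz : (d%:Z %| Q%:Z)%Z by rewrite dvdzE.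
have h1 : phi (a * u) = 1.
  apply: ht; first by rewrite coprimezMl ca cu.
  have -> : a * u - 1 = (a - b) * u + (- v) * Q%:Z by rewrite -huv; ring.
  apply: rpredD; first exact: dvdz_mulr.
  exact: dvdz_mull.
have h2 : phi (b * u) = 1.
  apply: ht; first by rewrite coprimezMl cb cu.
  have -> : b * u - 1 = (- v) * Q%:Z by rewrite -huv; ring.
  exact: dvdz_mull.
have nz : phi u != 0 by rewrite (dchar_neq0 hphi).
apply: (mulIf nz); by rewrite -!(dcharM hphi) h1 h2.
Qed.

Definition indc (d : nat) (n : int) : algC :=
  if coprimez n d%:Z then phi (n + d%:Z * (adj Q n)%:Z) else 0.

Variable d : nat.
Hypothesis dQ : (d %| Q)%N.
Hypothesis htr : triv d.

Lemma indc_val n' n : coprimez n' Q%:Z -> (d%:Z %| n' - n)%Z -> indc d n = phi n'.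
Proof.
move=> cn' hd.
have cnd : coprimez n d%:Z.
  apply: (coprimez_congr (a := n')) => //.
  exact: (coprimez_dvdr dQ).
rewrite /indc cnd.
have cr := adjP hQ cnd.
apply: (triv_congr dQ htr) => //.
have -> : n + d%:Z * (adj Q n)%:Z - n' = - (n' - n) + d%:Z * (adj Q n)%:Z by ring.
apply: rpredD; first by rewrite rpredN.
exact: dvdz_mulr (dvdzz _).
Qed.

Lemma indc_agree n : coprimez n Q%:Z -> indc d n = phi n.
Proof. move=> cn; apply: indc_val => //; by rewrite subrr dvdz0. Qed.

Lemma indc_rep n : coprimez n d%:Z -> exists n', coprimez n' Q%:Z /\ (d%:Z %| n' - n)%Z.
Proof.
move=> cn; exists (n + d%:Z * (adj Q n)%:Z); split; first exact: adjP.
have -> : n + d%:Z * (adj Q n)%:Z - n = d%:Z * (adj Q n)%:Z by ring.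
exact: dvdz_mulr (dvdzz _).
Qed.

Lemma indc_dchar : is_dchar d (indc d).
Proof.
split.
- rewrite (@indc_val 1) ?(dchar1 hphi) //; first exact: coprimez1.
  idtac.
  all: try by rewrite subrr dvdz0.
  all: try exact: coprimez1.
- move=> m n.
  case cm: (coprimez m d%:Z); last first.
    by rewrite /indc coprimezMl cm /= mul0r.
  case cn: (coprimez n d%:Z); last first.
    by rewrite /indc coprimezMl cn andbF /= mulr0.
  have [m' [cm' hm]] := indc_rep cm.
  have [n' [cn' hn]] := indc_rep cn.
  rewrite (indc_val cm' hm) (indc_val cn' hn) (@indc_val (m' * n')).
  + exact: (dcharM hphi).
  + by rewrite coprimezMl cm' cn'.
  + have -> : m' * n' - m * n = (m' - m) * n' + m * (n' - n) by ring.
    apply: rpredD; [exact: dvdz_mulr | exact: dvdz_mull].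
- move=> n.
  have ce : coprimez (n + d%:Z) d%:Z = coprimez n d%:Z.
    apply/idP/idP => h.
    + apply: (coprimez_congr h); have -> : n + d%:Z - n = d%:Z by ring. exact: dvdzz.
    + apply: (coprimez_congr h); have -> : n - (n + d%:Z) = - d%:Z by ring. by rewrite rpredN dvdzz.
  case cn: (coprimez n d%:Z); last by rewrite /indc ce cn.
  have [n' [cn' hn]] := indc_rep cn.
  rewrite (indc_val cn' hn) (@indc_val n') //.
  have -> : n' - (n + d%:Z) = (n' - n) - d%:Z by ring.
  by apply: rpredB => //; exact: dvdzz.
- move=> n.
  case cn: (coprimez n d%:Z); last by rewrite /indc cn eqxx.
  have [n' [cn' hn]] := indc_rep cn.
  by rewrite (indc_val cn' hn) (dchar_neq0 hphi).
Qed.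

End Induce.

Lemma prim_exists (Q : nat) phi : (0 < Q)%N -> is_dchar Q phi ->
  exists q chi, [/\ (q %| Q)%N, primitive_dchar q chi &
                    forall n, coprimez n Q%:Z -> chi n = phi n].
Proof.
move=> hQ hphi.
suff : forall d, (d %| Q)%N -> triv Q phi d -> exists q chi, [/\ (q %| Q)%N, primitive_dchar q chi &
                    forall n, coprimez n Q%:Z -> chi n = phi n].
  apply => //.
  move=> n cn hn; rewrite -(dchar1 hphi); exact: (dchar_mod hphi).
elim/ltn_ind => d IH dQ htr.
have hc := indc_dchar hQ hphi dQ htr.
case: (classic (primitive_dchar d (indc Q phi d))) => hp.
  exists d, (indc Q phi d); split => // n cn; exact: indc_agree.
have [d' hd'] : exists d', ~ ((d' %| d)%N -> (d' < d)%N ->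
    ~ (forall n : int, coprimez n d%:Z -> (n == 1 %[mod d'%:Z])%Z -> indc Q phi d n = 1)).
  apply: not_all_ex_not => hall; apply: hp; by split.
have [d'd [d'lt htr']] : [/\ (d' %| d)%N, (d' < d)%N &
    (forall n : int, coprimez n d%:Z -> (n == 1 %[mod d'%:Z])%Z -> indc Q phi d n = 1)].
  apply: NNPP => hn; apply: hd' => h1 h2 h3; apply: hn; by split.
apply: (IH d' d'lt); first exact: dvdn_trans dQ.
move=> n cn hn.
rewrite -(indc_agree hQ hphi dQ htr cn); apply: htr'.
- exact: (coprimez_dvdr dQ).
- by rewrite eqz_mod_dvd.
Qed.

Lemma lcm_iff (N f Nstar : nat) : (0 < N)%N -> (f %| N)%N -> (Nstar %| N)%N ->
  (Nstar %| lcmn f (N %/ f))%N = (gcdn f (N %/ f) %| N %/ Nstar)%N.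
Proof.
move=> N0 fN sN.
have f0 := prim_gt0 N0 fN.
have g0 : (0 < gcdn f (N %/ f))%N by rewrite gcdn_gt0 f0.
have e : (lcmn f (N %/ f) * gcdn f (N %/ f))%N = N by rewrite muln_lcm_gcd mulnC divnK.
move: e g0; set L := lcmn _ _; set g := gcdn _ _ => e g0.
by rewrite dvdn_divRL // mulnC -e dvdn_pmul2r.
Qed.

Lemma det_coprime (al be ga de : int) (N : nat) :
  al * de - be * ga = 1 -> (N%:Z %| ga)%Z -> coprimez de N%:Z.
Proof.
move=> hd /dvdzP [k hk]; apply/coprimezP; exists (al, - be * k) => /=.
by rewrite -hd hk; ring.
Qed.

(* stabiliser of 1/c *)
Lemma stab_form (al be ga de c : int) :
  al * de - be * ga = 1 -> al + de = 2 ->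
  (al * 1 + be * c) * c = (ga * 1 + de * c) * 1 ->
  de = 1 + be * c /\ ga = - be * c ^+ 2.
Proof.
move=> hd ht hf.
have e1 : al = 2 - de by rewrite -ht; ring.
have e2 : ga = (al + be * c) * c - de * c by rewrite mulr1 in hf; rewrite hf; ring.
have h : (de - 1 - be * c) ^+ 2 = - (al * de - be * ga - 1) by rewrite e2 e1; ring.
rewrite hd subrr oppr0 in h.
move/eqP: h; rewrite sqrf_eq0 => /eqP h.
have ede : de = 1 + be * c by rewrite -[de]subr0 -h; ring.
split => //; rewrite e2 e1 ede; ring.
Qed.

Lemma sing_suff (N Nstar : nat) (psi chistar : int -> algC) (f : nat) (u : int) :
  (0 < N)%N -> is_dchar Nstar chistar -> induced_by N psi chistar ->
  (f %| N)%N -> (Nstar %| N)%N -> (gcdn f (N %/ f) %| N %/ Nstar)%N ->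
  coprimez u N%:Z -> singular_cusp N psi (1, u * f%:Z).
Proof.
move=> N0 hcs hind fN sN hg cu al be ga de [hdet hN] htr /= hfix.
have f0 := prim_gt0 N0 fN.
have [ede ega] := stab_form hdet htr hfix.
have cde := det_coprime hdet hN.
rewrite hind // -(dchar1 hcs); apply: (dchar_mod hcs).
have -> : de - 1 = (be * f%:Z) * u by rewrite ede; ring.
apply: dvdz_mulr.
have hL : (Nstar %| lcmn f (N %/ f))%N by rewrite lcm_iff.
apply: (dvdz_trans (n := (lcmn f (N %/ f))%:Z)); first by rewrite dvdzE.
rewrite dvdz_lcm; apply/andP; split; first exact: dvdz_mull (dvdzz _).
have h1 : (N%:Z %| u ^+ 2 * (be * f%:Z * f%:Z))%Z.
  have -> : u ^+ 2 * (be * f%:Z * f%:Z) = - ga by rewrite ega; ring.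
  by rewrite rpredN.
rewrite Gauss_dvdzr in h1; last by rewrite coprimez_sym coprimezXl.
move: h1; rewrite -{1}(divnK fN) PoszM.
rewrite dvdz_mul2r //; by rewrite eqz_nat -lt0n.
Qed.

Lemma dvdz_natE (a b : nat) : (a%:Z %| b%:Z)%Z = (a %| b)%N.
Proof. by rewrite dvdzE. Qed.

Lemma coprimez_dvdN (u : int) (N f : nat) : (f %| N)%N -> coprimez u N%:Z -> coprimez u f%:Z.
Proof. move=> fN cu; exact: coprimez_dvdr fN cu. Qed.

Lemma equiv_inv (N f f' : nat) (u v : int) : (0 < N)%N -> (f %| N)%N -> (f' %| N)%N ->
  coprimez u N%:Z -> coprimez v N%:Z -> cusp_equiv N (1, u * f%:Z) (1, v * f'%:Z) ->
  f = f' /\ ((gcdn f (N %/ f))%:Z %| v - u)%Z.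
Proof.
move=> N0 fN f'N cu cv [al [be [ga [de [[hdet hN] /= [e1 e2]]]]]].
have f0 := prim_gt0 N0 fN.
have cde := det_coprime hdet hN.
have fNz : (f%:Z %| N%:Z)%Z by rewrite dvdz_natE.
have f'Nz : (f'%:Z %| N%:Z)%Z by rewrite dvdz_natE.
have d1 : (f %| f')%N.
  rewrite -dvdz_natE -(@Gauss_dvdzr _ v); last first.
    by rewrite coprimez_sym; apply: coprimez_dvdN cv.
  rewrite e2 mulr1; apply: rpredD; first exact: dvdz_trans fNz hN.
  by apply: dvdz_mull; apply: dvdz_mull; exact: dvdzz.
have d2 : (f' %| f)%N.
  rewrite -dvdz_natE -(@Gauss_dvdzr _ (de * u)); last first.
    rewrite coprimez_sym coprimezMl; apply/andP; split; [exact: coprimez_dvdN f'N cde | exact: coprimez_dvdN f'N cu].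
  have -> : de * u * f%:Z = v * f'%:Z - ga by rewrite e2; ring.
  apply: rpredB; first exact: dvdz_mull (dvdzz _).
  exact: dvdz_trans f'Nz hN.
have eff : f = f' by apply/eqP; rewrite eqn_dvd d1 d2.
split => //; subst f'.
set g := gcdn f (N %/ f).
have gf : (g%:Z %| f%:Z)%Z by rewrite dvdz_natE dvdn_gcdl.
have gM : (g%:Z %| (N %/ f)%N%:Z)%Z by rewrite dvdz_natE dvdn_gcdr.
have gN : (g%:Z %| N%:Z)%Z by apply: dvdz_trans gf fNz.
have hM : ((N %/ f)%N%:Z %| v - de * u)%Z.
  rewrite -(@dvdz_mul2r f%:Z); last by rewrite eqz_nat -lt0n.
  rewrite -PoszM divnK //.
  have -> : (v - de * u) * f%:Z = ga by rewrite mulr1 in e2; rewrite mulrBl e2; ring.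
  exact: hN.
have hde : (g%:Z %| de - 1)%Z.
  have -> : de - 1 = (de * be * u) * f%:Z + be * ga.
    have e1' : al = 1 - be * (u * f%:Z) by rewrite e1; ring.
    by rewrite -hdet e1'; ring.
  apply: rpredD; first exact: dvdz_mull.
  apply: dvdz_mull; exact: dvdz_trans gN hN.
have -> : v - u = (v - de * u) + u * (de - 1) by ring.
apply: rpredD; [exact: dvdz_trans gM hM | exact: dvdz_mull].
Qed.

Lemma sing_equiv (N : nat) (psi : int -> algC) (X Y : int * int) :
  is_dchar N psi -> cusp_equiv N X Y -> singular_cusp N psi Y -> singular_cusp N psi X.
Proof.
move=> hpsi [a [b [c [d [[hdg hNc] hY]]]]] hsY al be ga de [hdet hNga] htr hfix.
case: X hY hfix => x1 x2 hY /= hfix.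
pose al' := (a * al + b * ga) * d - (a * be + b * de) * c.
pose be' := - (a * al + b * ga) * b + (a * be + b * de) * a.
pose ga' := (c * al + d * ga) * d - (c * be + d * de) * c.
pose de' := - (c * al + d * ga) * b + (c * be + d * de) * a.
have h1 : in_Gamma0 N al' be' ga' de'.
  split.
  - have -> : al' * de' - be' * ga' = (a * d - b * c) ^+ 2 * (al * de - be * ga) by rewrite /al' /be' /ga' /de'; ring.
    by rewrite hdg hdet; ring.
  - have -> : ga' = c * (d * al - c * be - d * de) + ga * (d * d) by rewrite /ga'; ring.
    apply: rpredD; [exact: dvdz_mulr | exact: dvdz_mulr].
have h2 : al' + de' = 2.
  have -> : al' + de' = (a * d - b * c) * (al + de) by rewrite /al' /de'; ring.
  by rewrite hdg htr mul1r.
have h3 : (al' * Y.1 + be' * Y.2) * Y.2 = (ga' * Y.1 + de' * Y.2) * Y.1.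
  rewrite hY /=.
  apply/eqP; rewrite -subr_eq0; apply/eqP.
  have -> : (al' * (a * x1 + b * x2) + be' * (c * x1 + d * x2)) * (c * x1 + d * x2) -
    (ga' * (a * x1 + b * x2) + de' * (c * x1 + d * x2)) * (a * x1 + b * x2)
    = (a * d - b * c) ^+ 2 * ((al * x1 + be * x2) * x2 - (ga * x1 + de * x2) * x1)
    by rewrite /al' /be' /ga' /de'; ring.
  by rewrite hfix subrr mulr0.
have := hsY al' be' ga' de' h1 h2 h3.
move=> <-; apply: (dchar_mod hpsi).
have -> : de - de' = de * (1 - (a * d - b * c)) + c * (b * al - a * be - b * de) + ga * (d * b)
  by rewrite /de'; ring.
rewrite hdg subrr mulr0 add0r.
apply: rpredD; [exact: dvdz_mulr | exact: dvdz_mulr].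
Qed.

Lemma sing_nec (N Nstar f : nat) (psi chistar : int -> algC) (u : int) :
  (0 < N)%N -> is_dchar N psi -> primitive_dchar Nstar chistar -> induced_by N psi chistar ->
  (Nstar %| N)%N -> (f %| N)%N -> coprimez u N%:Z -> singular_cusp N psi (1, u * f%:Z) ->
  (gcdn f (N %/ f) %| N %/ Nstar)%N.
Proof.
move=> N0 hpsi hstar hind sN fN cu hsing.
rewrite -lcm_iff //.
set L := lcmn f (N %/ f).
have s0 := prim_gt0 N0 sN.
apply: (prim_dvd s0 N0 hstar) => n cn /dvdzP [k hk].
have /coprimezP [[ub vb] /= huv] := cu.
have fL : (f %| L)%N by apply: dvdn_lcml.
set t0 := (L %/ f)%N.
have eL : (t0 * f)%N = L by rewrite divnK.
set be := ub * k * t0%:Z.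
have NLf : (N%:Z %| L%:Z * f%:Z)%Z.
  rewrite -PoszM dvdz_natE -{1}(divnK fN) dvdn_pmul2r; last exact: prim_gt0 N0 fN.
  exact: dvdn_lcmr.
have h1 : psi (1 + be * (u * f%:Z)) = 1.
  apply: (hsing (1 - be * (u * f%:Z)) be (- be * (u * f%:Z) ^+ 2)).
- split; first by ring.
  have -> : - be * (u * f%:Z) ^+ 2 = (- (k * u * (ub * u))) * (L%:Z * f%:Z).
    by rewrite /be -eL PoszM; ring.
  exact: dvdz_mull.
- ring.
- rewrite /=; ring.
rewrite -hind // -h1; apply: (dchar_mod hpsi).
have -> : n - (1 + be * (u * f%:Z)) = (k * L%:Z * vb) * N%:Z.
  have -> : n = k * L%:Z + 1 by rewrite -hk; ring.
  have e1 : ub * u = 1 - vb * N%:Z by rewrite -huv; ring.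
  have -> : be * (u * f%:Z) = k * (ub * u) * (t0%:Z * f%:Z) by rewrite /be; ring.
  rewrite e1 -PoszM eL; ring.
exact: dvdz_mull (dvdzz _).
Qed.

Lemma coprimez_of_dvd (a c g : int) : coprimez a c -> (g %| c)%Z -> coprimez a g.
Proof.
move=> /coprimezP [[p1 p2] /= h] /dvdzP [w hw].
apply/coprimezP; exists (p1, p2 * w) => /=; rewrite -h hw; ring.
Qed.

Lemma cusp_rep (N : nat) (R : nat -> seq int) (a c : int) : (0 < N)%N ->
  (forall f : nat, (0 < f)%N -> (f %| N)%N -> reps_ok N (gcdn f (N %/ f)) (R f)) ->
  coprimez a c ->
  exists f u, [/\ (0 < f)%N, (f %| N)%N, u \in R f & cusp_equiv N (1, u * f%:Z) (a, c)].
Proof.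
move=> N0 HR cac.
set f := gcdn `|c| N.
have f0 : (0 < f)%N by rewrite gcdn_gt0 N0 orbT.
have fN : (f %| N)%N by apply: dvdn_gcdr.
have fc : (f%:Z %| c)%Z by rewrite dvdzE; apply: dvdn_gcdl.
set M := (N %/ f)%N.
have eN : (M * f)%N = N by rewrite divnK.
set c1 := (c %/ f%:Z)%Z.
have ec : c = c1 * f%:Z by rewrite divzK.
have fnz : f%:Z != 0 by rewrite eqz_nat -lt0n.
have cc1 : coprimez c1 M%:Z.
  have h : gcdz c N%:Z = f%:Z by [].
  rewrite ec -eN PoszM -mulz_gcdl in h.
  rewrite /coprimez; apply/eqP.
  have : gcdz c1 M%:Z * f%:Z = 1 * f%:Z by rewrite mul1r h.
  by move/(mulIf fnz).
set g := gcdn f M.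
have gf : (g%:Z %| f%:Z)%Z by rewrite dvdz_natE dvdn_gcdl.
have gM : (g%:Z %| M%:Z)%Z by rewrite dvdz_natE dvdn_gcdr.
have gN : (g%:Z %| N%:Z)%Z by rewrite -eN PoszM; exact: dvdz_mull.
have /coprimezP [[p1 p2] /= hb] := cac.
set de0 := p1; set be0 := - p2.
have hb' : de0 * a - be0 * c = 1 by rewrite /de0 /be0 -hb; ring.
have cag : coprimez a g%:Z by apply: (coprimez_of_dvd cac); apply: dvdz_trans gf fc.
have c1g : coprimez c1 g%:Z by apply: (coprimez_of_dvd cc1).
have cx0 : coprimez (c1 * a) g%:Z by rewrite coprimezMl c1g cag.
have [_ _ hrep] := HR f f0 fN.
have [u uR hu] := hrep _ cx0.
rewrite eqz_mod_dvd in hu.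
have [cuN _ _] := HR f f0 fN.
have cu := cuN u uR.
have cuM : coprimez u M%:Z by apply: (coprimez_of_dvd cu); rewrite -eN PoszM; by apply: dvdz_mulr; exact: dvdzz.
have /coprimezP [[ub vb] /= huv] := cuM.
have hg : (gcdz c M%:Z %| de0 - c1 * ub)%Z.
  have -> : gcdz c M%:Z = g%:Z.
    rewrite gcdzC ec mulrC Gauss_gcdzl; last by rewrite coprimez_sym.
    by rewrite gcdzC.
  rewrite -(@Gauss_dvdzr _ u); last first.
    rewrite coprimez_sym; exact: (coprimez_of_dvd cu).
  have -> : u * (de0 - c1 * ub) = (u - c1 * a) * de0 + (c1 * be0 * c1) * f%:Z + c1 * vb * M%:Z.
    have e1 : ub * u = 1 - vb * M%:Z by rewrite -huv; ring.
    have e2 : de0 * a = 1 + be0 * c by rewrite -hb'; ring.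
    have -> : u * (de0 - c1 * ub) = u * de0 - c1 * (ub * u) by ring.
    rewrite e1.
    have -> : (u - c1 * a) * de0 = u * de0 - c1 * (de0 * a) by ring.
    rewrite e2 ec; ring.
  apply: rpredD; first apply: rpredD.
  - exact: dvdz_mulr.
  - exact: dvdz_mull.
  - exact: dvdz_mull.
have [k [hk1 hk2]] := crt_gcd hg.
have /dvdzP [t ht] := hk1.
set de := k; set be := be0 + a * t.
exists f, u; split => //.
exists (a - u * f%:Z * be), be, (c - u * f%:Z * de), de; split; last first.
  by rewrite /=; congr pair; ring.
split.
- have -> : (a - u * f%:Z * be) * de - be * (c - u * f%:Z * de) = de * a - be * c by ring.
  have -> : de = de0 + t * c by rewrite /de -ht; ring.
  rewrite /be -hb'; ring.
- have -> : c - u * f%:Z * de = (c1 - u * de) * f%:Z by rewrite ec; ring.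
  rewrite -eN PoszM dvdz_mul2r //.
  have -> : c1 - u * de = c1 * vb * M%:Z - u * (k - c1 * ub).
    have e1 : ub * u = 1 - vb * M%:Z by rewrite -huv; ring.
    have -> : c1 * vb * M%:Z = c1 * (1 - ub * u) by rewrite e1; ring.
    rewrite /de; ring.
  apply: rpredB; [exact: dvdz_mull (dvdzz _) | exact: dvdz_mull].
Qed.

Lemma uniq_map_inj (T1 T2 : eqType) (h : T1 -> T2) (s : seq T1) u v :
  uniq (map h s) -> u \in s -> v \in s -> h u = h v -> u = v.
Proof.
elim: s => //= x s IH /andP [hx hu]; rewrite !in_cons.
case/orP => [/eqP ->|us]; case/orP => [/eqP ->|vs] // e.
- by move: hx; rewrite e map_f.
- by move: hx; rewrite -e map_f.
- exact: IH.
Qed.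

Section IP.
Variables (V : lmodType algC) (ip : V -> V -> algC).
Hypothesis Hip_l : forall (a : algC) (u v w : V), ip (a *: u + v) w = a * ip u w + ip v w.
Hypothesis Hip_r : forall (a : algC) (u v w : V), ip w (a *: u + v) = a^* * ip w u + ip w v.

Lemma ip0l w : ip 0 w = 0.
Proof.
have := Hip_l 1 0 0 w; rewrite scaler0 addr0 mul1r => h.
have : ip 0 w + ip 0 w - ip 0 w = ip 0 w - ip 0 w by rewrite -h.
by rewrite addrK subrr.
Qed.

Lemma ip0r w : ip w 0 = 0.
Proof.
have := Hip_r 1 0 0 w; rewrite scaler0 addr0 rmorph1 mul1r => h.
have : ip w 0 + ip w 0 - ip w 0 = ip w 0 - ip w 0 by rewrite -h.
by rewrite addrK subrr.
Qed.

Lemma ipZl a u w : ip (a *: u) w = a * ip u w.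
Proof. by have := Hip_l a u 0 w; rewrite addr0 ip0l addr0. Qed.
Lemma ipDl u v w : ip (u + v) w = ip u w + ip v w.
Proof. by have := Hip_l 1 u v w; rewrite scale1r mul1r. Qed.
Lemma ipZr a u w : ip w (a *: u) = a^* * ip w u.
Proof. by have := Hip_r a u 0 w; rewrite addr0 ip0r addr0. Qed.
Lemma ipDr u v w : ip w (u + v) = ip w u + ip w v.
Proof. by have := Hip_r 1 u v w; rewrite scale1r rmorph1 mul1r. Qed.

Lemma ip_suml (I : Type) (s : seq I) (F : I -> V) w :
  ip (\sum_(i <- s) F i) w = \sum_(i <- s) ip (F i) w.
Proof.
elim: s => [|x s IH]; first by rewrite !big_nil ip0l.
by rewrite !big_cons ipDl IH.
Qed.

Lemma ip_sumr (I : Type) (s : seq I) (F : I -> V) w :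
  ip w (\sum_(i <- s) F i) = \sum_(i <- s) ip w (F i).
Proof.
elim: s => [|x s IH]; first by rewrite !big_nil ip0r.
by rewrite !big_cons ipDr IH.
Qed.

Lemma ip_sum2 (I J : Type) (s : seq I) (t : seq J) (c : I -> algC) (d : J -> algC)
   (E1 : I -> V) (E2 : J -> V) :
  ip (\sum_(i <- s) c i *: E1 i) (\sum_(j <- t) d j *: E2 j) =
  \sum_(i <- s) \sum_(j <- t) (c i * (d j)^* * ip (E1 i) (E2 j)).
Proof.
rewrite ip_suml; apply: eq_bigr => i _.
rewrite ipZl ip_sumr big_distrr; apply: eq_bigr => j _.
by rewrite ipZr; exact: mulrA.
Qed.

Lemma ip_diag (I : eqType) (s : seq I) (c d : I -> algC) (E1 : I -> V) :
  uniq s -> (forall i, i \in s -> ip (E1 i) (E1 i) = 1) ->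
  (forall i j, i \in s -> j \in s -> i != j -> ip (E1 i) (E1 j) = 0) ->
  ip (\sum_(i <- s) c i *: E1 i) (\sum_(j <- s) d j *: E1 j) =
  \sum_(i <- s) c i * (d i)^*.
Proof.
move=> us h1 h0; rewrite ip_sum2 big_seq_cond [RHS]big_seq_cond.
apply: eq_bigr => i /andP [hi _].
rewrite (bigD1_seq i) //= h1 // mulr1 big_seq_cond big1 ?addr0 // => j /andP [hj hji].
by rewrite h0 ?mulr0 // eq_sym.
Qed.
End IP.

Lemma dvd_qq (N f q1 q2 : nat) : (f %| N)%N -> (q1 %| N %/ f)%N -> (q2 %| f)%N -> (q1 * q2 %| N)%N.
Proof. move=> fN h1 h2; rewrite -(divnK fN); exact: dvdn_mul. Qed.

Lemma sim_psi (N f q1 q2 : nat) c1 c2 psi : (f %| N)%N -> (q1 %| N %/ f)%N -> (q2 %| f)%N ->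
  sim_char q1 q2 N c1 c2 psi -> forall n, coprimez n N%:Z -> c1 n * (c2 n)^* = psi n.
Proof.
move=> fN h1 h2 [q0 [chi0 [_ hi1 hi2]]] n cn.
rewrite hi2 // -hi1 //; apply: coprimez_dvdr cn; exact: dvd_qq fN h1 h2.
Qed.

Lemma dchar_normN (N q : nat) chi n : (0 < N)%N -> (q %| N)%N -> is_dchar q chi ->
  coprimez n N%:Z -> chi n * (chi n)^* = 1.
Proof.
move=> N0 qN hc cn; apply: (dchar_norm hc); first exact: prim_gt0 N0 qN.
exact: coprimez_dvdr qN cn.
Qed.

Lemma dchar_neq0N (N q : nat) chi n : (q %| N)%N -> is_dchar q chi ->
  coprimez n N%:Z -> chi n != 0.
Proof. move=> qN hc cn; rewrite (dchar_neq0 hc); exact: coprimez_dvdr qN cn. Qed.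

Section Orth.
Variables (N f : nat) (s : seq int) (psi : int -> algC).
Variables (q1 q2 q1' q2' : nat) (c1 c2 c1' c2' : int -> algC).
Hypotheses (N0 : (0 < N)%N) (fN : (f %| N)%N) (hs : reps_ok N (gcdn f (N %/ f)) s).
Hypotheses (h1 : (q1 %| N %/ f)%N) (h2 : (q2 %| f)%N) (p1 : primitive_dchar q1 c1)
  (p2 : primitive_dchar q2 c2) (sm : sim_char q1 q2 N c1 c2 psi).
Hypotheses (h1' : (q1' %| N %/ f)%N) (h2' : (q2' %| f)%N) (p1' : primitive_dchar q1' c1')
  (p2' : primitive_dchar q2' c2') (sm' : sim_char q1' q2' N c1' c2' psi).

Let g := gcdn f (N %/ f).
Let MN : (N %/ f %| N)%N. Proof. by apply: dvdn_div. Qed.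
Let q1N : (q1 %| N)%N. Proof. exact: dvdn_trans h1 MN. Qed.
Let q1'N : (q1' %| N)%N. Proof. exact: dvdn_trans h1' MN. Qed.
Let q2N : (q2 %| N)%N. Proof. exact: dvdn_trans h2 fN. Qed.
Let q2'N : (q2' %| N)%N. Proof. exact: dvdn_trans h2' fN. Qed.

Let h (n : int) := c1 n * (c1' n)^*.

Lemma h_alt n : coprimez n N%:Z -> h n = c2 n * (c2' n)^*.
Proof.
move=> cn.
have e := sim_psi fN h1 h2 sm cn.
have e' := sim_psi fN h1' h2' sm' cn.
have n2 := dchar_normN N0 q2N p2.1 cn.
have n1' := dchar_normN N0 q1'N p1'.1 cn.
rewrite /h -[LHS]mulr1 -n2.
have -> : c1 n * (c1' n)^* * (c2 n * (c2 n)^*) = (c1 n * (c2 n)^*) * (c1' n)^* * c2 n by ring.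
rewrite e -e'.
have -> : c1' n * (c2' n)^* * (c1' n)^* * c2 n = (c1' n * (c1' n)^*) * (c2 n * (c2' n)^*) by ring.
by rewrite n1' mul1r.
Qed.

Lemma h_per n m : coprimez n N%:Z -> coprimez m N%:Z -> (g%:Z %| n - m)%Z -> h n = h m.
Proof.
move=> cn cm hnm.
have hg : (gcdz (N %/ f)%N%:Z f%:Z %| n - m)%Z by rewrite /gcdz /= gcdnC.
have [k [hk1 hk2]] := crt_gcd hg.
have ck : coprimez k N%:Z.
  rewrite -(divnK fN) PoszM coprimezMr; apply/andP; split.
  - apply: (coprimez_congr (a := n)); first exact: coprimez_dvdr MN cn.
    by rewrite dvdz_subC.
  - apply: (coprimez_congr (a := m)); first exact: coprimez_dvdr fN cm.
    by rewrite dvdz_subC.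
have -> : h n = h k.
  rewrite /h; congr (_ * _ ^*).
  - apply: (dchar_mod p1.1); rewrite dvdz_subC; apply: dvdz_trans hk1; by rewrite dvdz_natE.
  - apply: (dchar_mod p1'.1); rewrite dvdz_subC; apply: dvdz_trans hk1; by rewrite dvdz_natE.
rewrite h_alt // h_alt //; congr (_ * _ ^*).
- apply: (dchar_mod p2.1); apply: dvdz_trans hk2; by rewrite dvdz_natE.
- apply: (dchar_mod p2'.1); apply: dvdz_trans hk2; by rewrite dvdz_natE.
Qed.

Lemma hM n m : h (n * m) = h n * h m.
Proof. rewrite /h (dcharM p1.1) (dcharM p1'.1) rmorphM; ring. Qed.

Lemma orth_sum : ((forall n, c1 n = c1' n) /\ (forall n, c2 n = c2' n)) \/
  \sum_(u <- s) c1 (- u) * (c1' (- u))^* = 0.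
Proof.
case: (classic (forall n, coprimez n N%:Z -> h n = 1)) => hall.
- left.
  have e1 : forall n, coprimez n N%:Z -> c1 n = c1' n.
    move=> n cn; have := hall n cn; rewrite /h => e.
    have n1' := dchar_normN N0 q1'N p1'.1 cn.
    by rewrite -[RHS]mul1r -e -mulrA [_^* * _]mulrC n1' mulr1.
  have [_ E1] := prim_unique N0 q1N q1'N p1 p1' e1.
  split => //.
  have e2 : forall n, coprimez n N%:Z -> c2 n = c2' n.
    move=> n cn.
    have e := sim_psi fN h1 h2 sm cn.
    have e' := sim_psi fN h1' h2' sm' cn.
    have nz : c1 n != 0 by apply: (dchar_neq0N q1N p1.1).
    rewrite -e' -E1 in e.
    have := mulfI nz e => /(congr1 (@Num.conj_op _)); by rewrite !conjCK.
  by have [_ E2] := prim_unique N0 q2N q2'N p2 p2' e2.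
- right.
  have [w [cw hw]] : exists w, coprimez w N%:Z /\ h w != 1.
    apply: NNPP => hn; apply: hall => n cn; apply: NNPP => hn1; apply: hn.
    by exists n; split => //; apply/eqP.
  have [cs us hex] := hs.
  have gN : (g %| N)%N by apply: dvdn_trans (dvdn_gcdl _ _) fN.
  set P := fun u : int => fun u' : int => (u' == w * u %[mod g%:Z])%Z.
  pose pi (u : int) := nth 0 s (find (P u) s).
  have hpi : forall u, u \in s -> pi u \in s /\ (g%:Z %| pi u - w * u)%Z.
    move=> u us0.
    have cwu : coprimez (w * u) g%:Z.
      rewrite coprimezMl; apply/andP; split; apply: (coprimez_dvdr gN); [exact: cw | exact: cs].
    have hh : has (P u) s.
      have [u' u's hu'] := hex _ cwu; apply/hasP; by exists u'.
    split; first by rewrite /pi mem_nth // -has_find.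
    by have := nth_find 0 hh; rewrite /P eqz_mod_dvd.
  have us' : uniq s by apply: map_uniq us.
  have inj : {in s &, injective pi}.
    move=> u v hu hv e.
    apply: (uniq_map_inj us hu hv); apply/eqP; rewrite -/(_ == _ %[mod _])%Z eqz_mod_dvd.
    have [_ d1] := hpi u hu; have [_ d2] := hpi v hv.
    rewrite e in d1.
    have : (g%:Z %| w * (u - v))%Z.
      have -> : w * (u - v) = (pi v - w * v) - (pi v - w * u) by ring.
      exact: rpredB.
    rewrite Gauss_dvdzr //; rewrite coprimez_sym; exact: coprimez_dvdr gN cw.
  have hperm : perm_eq (map pi s) s.
    apply: uniq_perm => //; first by rewrite map_inj_in_uniq.
    have hu1 : uniq (map pi s) by rewrite map_inj_in_uniq.
    have hsub : {subset map pi s <= s}.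
      move=> x /mapP [u hu ->]; by have [] := hpi u hu.
    have hsz : (size s <= size (map pi s))%N by rewrite size_map.
    exact: (uniq_min_size hu1 hsub hsz).2.
  set S := \sum_(u <- s) _.
  have eS : S = h w * S.
    rewrite {1}/S -(perm_big _ hperm) big_map /S big_distrr /=.
    rewrite !big_seq; apply: eq_bigr => u hu.
    have [pin hd] := hpi u hu.
    rewrite -/(h (- pi u)) -/(h (- u)) -hM.
    apply: h_per.
    + by rewrite coprimeNz cs.
    + by rewrite mulrN coprimeNz coprimezMl cw cs.
    + have -> : - pi u - w * - u = - (pi u - w * u) by ring.
      by rewrite rpredN.
  have : S * (1 - h w) = 0 by rewrite mulrBr mulr1 mulrC -eS subrr.
  move/eqP; rewrite mulf_eq0 subr_eq0 [1 == _]eq_sym (negbTE hw) orbF => /eqP //.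
Qed.
End Orth.

Section ZpInt.
Variable g : nat.
Hypothesis g1 : (1 < g)%N.

Lemma Zp_intE (z : int) : (z%:~R : 'Z_g) = (-1) ^+ (z < 0)%R * (`|z|%N%:R : 'Z_g).
Proof. by rewrite {1}[z]intEsign intrM rmorph_sign. Qed.

Lemma sign_unit (b : bool) : ((-1) ^+ b : 'Z_g) \is a GRing.unit.
Proof. by rewrite unitrX ?unitrN1. Qed.

Lemma Zp_int_unit (z : int) : coprimez z g%:Z -> (z%:~R : 'Z_g) \is a GRing.unit.
Proof.
move=> cz; rewrite Zp_intE unitrMl ?sign_unit // unitZpE //.
by rewrite coprime_sym; move: cz; rewrite coprimezE.
Qed.

Lemma Zp_int_eq0 (z : int) : ((z%:~R : 'Z_g) == 0) = (g%:Z %| z)%Z.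
Proof.
rewrite Zp_intE mulrI_eq0; last exact: mulrI (sign_unit _).
rewrite dvdzE /= /dvdn; apply/eqP/eqP => [h|h].
- have := val_Zp_nat g1 `|z|%N; by rewrite h.
- apply: val_inj; by rewrite /= val_Zp_nat // h.
Qed.
Lemma Zp_int_inj (x y : int) : ((x%:~R : 'Z_g) == y%:~R) = (g%:Z %| x - y)%Z.
Proof. by rewrite -subr_eq0 -intrB Zp_int_eq0. Qed.

Definition toU (z : int) : {unit 'Z_g} := insubd (1%g : {unit 'Z_g}) (z%:~R : 'Z_g).

Lemma toU_val z : coprimez z g%:Z -> val (toU z) = z%:~R.
Proof. by move=> cz; rewrite /toU insubdK //; apply: Zp_int_unit. Qed.

Lemma toUM x y : coprimez x g%:Z -> coprimez y g%:Z -> toU (x * y) = (toU x * toU y)%g.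
Proof.
move=> cx cy; apply: val_inj.
rewrite toU_val ?coprimezMl ?cx ?cy //.
by rewrite /= !toU_val // intrM.
Qed.

Lemma toU_eq x y : coprimez x g%:Z -> coprimez y g%:Z ->
  (toU x == toU y) = (g%:Z %| x - y)%Z.
Proof.
move=> cx cy; rewrite -Zp_int_inj -!toU_val //.
all: try by apply/eqP/eqP => [->|/val_inj].
Qed.

Let G := units_Zp g.

Definition theta (i : Iirr G) (z : int) : algC :=
  if coprimez z g%:Z then 'chi_i (toU z) else 0.

Lemma theta_dchar i : is_dchar g (theta i).
Proof.
have lin : 'chi[G]_i \is a linear_char by move/char_abelianP: (units_Zp_abelian g); apply.
have inG : forall u, u \in G by move=> u; rewrite inE.
split.
- rewrite /theta coprimez1.
  have -> : toU 1 = 1%g by apply: val_inj; rewrite toU_val ?coprimez1.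
  exact: lin_char1.
- move=> m n; rewrite /theta coprimezMl.
  case cm: (coprimez m g%:Z); case cn: (coprimez n g%:Z) => /=; rewrite ?mul0r ?mulr0 //.
  by rewrite toUM // (lin_charM lin).
- move=> n.
  have ce : coprimez (n + g%:Z) g%:Z = coprimez n g%:Z.
    apply/idP/idP => h.
    + apply: (coprimez_congr h); have -> : n + g%:Z - n = g%:Z by ring. exact: dvdzz.
    + apply: (coprimez_congr h); have -> : n - (n + g%:Z) = - g%:Z by ring. by rewrite rpredN dvdzz.
  rewrite /theta ce; case cn: (coprimez n g%:Z) => //.
  congr ('chi_i _); apply/eqP; rewrite toU_eq ?ce //.
  have -> : n + g%:Z - n = g%:Z by ring. exact: dvdzz.
- move=> n; rewrite /theta; case: (coprimez n g%:Z); last by rewrite eqxx.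
  exact: lin_char_neq0.
Qed.

Lemma theta_orth x y : coprimez x g%:Z -> coprimez y g%:Z ->
  \sum_i theta i x * (theta i y)^* = if (g%:Z %| x - y)%Z then (#|('C_G[toU x])%g|)%:R else 0.
Proof.
move=> cx cy.
rewrite /theta cx cy.
rewrite second_orthogonality_relation; last by rewrite inE.
have -> : ((toU y) ^: units_Zp_group g)%g = [set toU y].
  by move/abelian_classP: (units_Zp_abelian g); apply; rewrite inE.
by rewrite inE toU_eq //; case: ifP.
Qed.

End ZpInt.

Lemma char_family (g : nat) : (0 < g)%N -> exists (n : nat) (th : 'I_n -> int -> algC),
  (forall i, is_dchar g (th i)) /\
  (forall x y, coprimez x g%:Z -> coprimez y g%:Z -> ~~ (g%:Z %| x - y)%Z ->
     \sum_(i < n) th i x * (th i y)^* = 0) /\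
  (forall x, coprimez x g%:Z -> \sum_(i < n) th i x * (th i x)^* != 0).
Proof.
move=> g0.
case: (ltnP 1 g) => g1.
- exists (Nirr (units_Zp g)), (@theta g); split; first exact: theta_dchar.
  split.
  + move=> x y cx cy hxy; by rewrite theta_orth // (negbTE hxy).
  + move=> x cx; rewrite theta_orth // subrr dvdz0 pnatr_eq0 -lt0n.
    exact: cardG_gt0.
- have eg : g = 1%N by lia.
  subst g.
  exists 1%N, (fun _ _ => 1); split.
  + move=> _; split => //.
    * by move=> m n; rewrite mulr1.
    * by move=> n; rewrite /coprimez gcdz1 oner_neq0.
  split.
  + move=> x y _ _; by rewrite dvd1z.
  + by move=> x _; rewrite big_ord1 conjC1 mulr1 oner_neq0.
Qed.

Lemma split_exists (N f Nstar : nat) : (0 < N)%N -> (f %| N)%N -> (Nstar %| N)%N ->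
  (gcdn f (N %/ f) %| N %/ Nstar)%N ->
  exists a b : nat, [/\ (a * b)%N = Nstar, coprime a b, (a %| N %/ f)%N & (b %| f)%N].
Proof.
move=> N0 fN sN hg.
have f0 := prim_gt0 N0 fN.
have s0 := prim_gt0 N0 sN.
set M := (N %/ f)%N.
have eN : (f * M)%N = N by rewrite /M mulnC divnK.
have M0 : (0 < M)%N by move: N0; rewrite -eN muln_gt0 => /andP [].
pose pi : nat_pred := [pred p | logn p Nstar <= logn p M]%N.
exists (Nstar`_pi)%N, (Nstar`_pi^')%N; split.
- exact: partnC.
- exact: coprime_partC.
- apply/dvdn_partP; first exact: part_gt0.
  move=> p; rewrite pi_of_part // inE => /andP [pN ppi].
  have pp : prime p by move: pN; rewrite mem_primes => /andP [].
  rewrite partn_part; last by move=> x; rewrite !inE => /eqP ->.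
  by rewrite p_part pfactor_dvdn.
- apply/dvdn_partP; first exact: part_gt0.
  move=> p; rewrite pi_of_part // inE => /andP [pN ppi].
  have pp : prime p by move: pN; rewrite mem_primes => /andP [].
  rewrite partn_part; last by move=> x; rewrite !inE => /eqP ->.
  rewrite p_part pfactor_dvdn //.
  move: ppi; rewrite !inE /= -ltnNge => hlt.
  have sd : (0 < N %/ Nstar)%N by rewrite divn_gt0 // dvdn_leq.
  have := dvdn_leq_log p sd hg.
  have eL : logn p N = (logn p f + logn p M)%N by rewrite -{1}eN lognM.
  rewrite logn_gcd // (logn_div p sN) eL.
  have := dvdn_leq_log p N0 sN; rewrite eL -/M; lia.
Qed.

Lemma conj_dchar q chi : is_dchar q chi -> is_dchar q (fun n => (chi n)^*).
Proof.
move=> hc; split.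
- by rewrite (dchar1 hc) conjC1.
- by move=> m n; rewrite (dcharM hc) rmorphM.
- by move=> n; rewrite (dcharD hc).
- by move=> n; rewrite conjC_eq0 (dchar_neq0 hc).
Qed.

Lemma coprimez_addmod (n : int) (Q : nat) : coprimez (n + Q%:Z) Q%:Z = coprimez n Q%:Z.
Proof.
apply/idP/idP => h.
- apply: (coprimez_congr h); have -> : n + Q%:Z - n = Q%:Z by ring. exact: dvdzz.
- apply: (coprimez_congr h); have -> : n - (n + Q%:Z) = - Q%:Z by ring. by rewrite rpredN dvdzz.
Qed.

Lemma prod_dchar (Q q1 q2 : nat) c1 c2 : is_dchar q1 c1 -> is_dchar q2 c2 ->
  (q1 %| Q)%N -> (q2 %| Q)%N ->
  is_dchar Q (fun n => if coprimez n Q%:Z then c1 n * c2 n else 0).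
Proof.
move=> h1 h2 d1 d2; split.
- by rewrite coprimez1 (dchar1 h1) (dchar1 h2) mulr1.
- move=> m n; rewrite coprimezMl.
  case: (coprimez m Q%:Z); case: (coprimez n Q%:Z); rewrite /= ?mul0r ?mulr0 //.
  rewrite (dcharM h1) (dcharM h2); ring.
- move=> n; rewrite coprimez_addmod; case: (coprimez n Q%:Z) => //.
  congr (_ * _).
  + apply: (dchar_mod h1); have -> : n + Q%:Z - n = Q%:Z by ring. by rewrite dvdz_natE.
  + apply: (dchar_mod h2); have -> : n + Q%:Z - n = Q%:Z by ring. by rewrite dvdz_natE.
- move=> n; case cn: (coprimez n Q%:Z); last by rewrite eqxx.
  rewrite mulf_neq0 // ?(dchar_neq0 h1) ?(dchar_neq0 h2); exact: coprimez_dvdr cn.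
Qed.

Lemma mulconj_dchar (q1 q2 : nat) c1 c2 : is_dchar q1 c1 -> is_dchar q2 c2 ->
  is_dchar (q1 * q2) (fun n => c1 n * (c2 n)^*).
Proof.
move=> h1 h2; split.
- by rewrite (dchar1 h1) (dchar1 h2) conjC1 mulr1.
- move=> m n; rewrite (dcharM h1) (dcharM h2) rmorphM; ring.
- move=> n; congr (_ * _ ^*).
  + apply: (dchar_mod h1); have -> : n + (q1 * q2)%N%:Z - n = q2%:Z * q1%:Z by rewrite PoszM; ring.
    exact: dvdz_mull (dvdzz _).
  + apply: (dchar_mod h2); have -> : n + (q1 * q2)%N%:Z - n = q1%:Z * q2%:Z by rewrite PoszM; ring.
    exact: dvdz_mull (dvdzz _).
- move=> n; rewrite PoszM coprimezMr mulf_eq0 conjC_eq0 negb_or.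
  by rewrite (dchar_neq0 h1) (dchar_neq0 h2).
Qed.

Lemma alpha_beta (Nstar a b : nat) chistar : (a * b)%N = Nstar -> coprime a b ->
  is_dchar Nstar chistar ->
  exists al be : int -> algC, [/\ is_dchar a al, is_dchar b be &
    forall n, al n * (be n)^* = chistar n].
Proof.
move=> eab cab hc.
have : coprimez a%:Z b%:Z by rewrite coprimezE.
move=> /coprimezP [[x y] /= hxy].
set A := x * a%:Z.
have eB : y * b%:Z = 1 - A by rewrite /A -hxy; ring.
have hNs : (Nstar%:Z %| A * (1 - A))%Z.
  rewrite -eB -eab PoszM; have -> : A * (y * b%:Z) = (x * y) * (a%:Z * b%:Z) by rewrite /A; ring.
  exact: dvdz_mull (dvdzz _).
pose al := fun n => chistar (n * (1 - A) + A).
pose be' := fun n => chistar (n * A + (1 - A)).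
have cM : coprimez (a * b)%N%:Z = coprimez Nstar%:Z by rewrite eab.
have hal : is_dchar a al.
  split.
  - rewrite /al mul1r; have -> : 1 - A + A = 1 by ring. exact: dchar1 hc.
  - move=> m n; rewrite /al -(dcharM hc); apply: (dchar_mod hc).
    have -> : m * n * (1 - A) + A - (m * (1 - A) + A) * (n * (1 - A) + A) =
      (A * (1 - A)) * (m * n - m - n + 1) by ring.
    exact: dvdz_mulr.
  - move=> n; rewrite /al; apply: (dchar_mod hc).
    have -> : (n + a%:Z) * (1 - A) + A - (n * (1 - A) + A) = a%:Z * (y * b%:Z) by rewrite eB; ring.
    rewrite -eab PoszM; have -> : a%:Z * (y * b%:Z) = y * (a%:Z * b%:Z) by ring.
    exact: dvdz_mull (dvdzz _).
  - move=> n; rewrite /al (dchar_neq0 hc) -eab PoszM coprimezMr.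
    have -> : coprimez (n * (1 - A) + A) a%:Z = coprimez n a%:Z.
      apply/idP/idP => h; apply: (coprimez_congr h).
      + have -> : n * (1 - A) + A - n = (x * (1 - n)) * a%:Z by rewrite /A; ring. exact: dvdz_mull (dvdzz _).
      + have -> : n - (n * (1 - A) + A) = (x * (n - 1)) * a%:Z by rewrite /A; ring. exact: dvdz_mull (dvdzz _).
    have -> : coprimez (n * (1 - A) + A) b%:Z.
      apply: coprimez_of1.
      have -> : n * (1 - A) + A - 1 = ((n - 1) * y) * b%:Z.
        have -> : (n - 1) * y * b%:Z = (n - 1) * (y * b%:Z) by ring.
        rewrite eB; ring.
      exact: dvdz_mull (dvdzz _).
    by rewrite andbT.
have hbe' : is_dchar b be'.
  split.
  - rewrite /be' mul1r; have -> : A + (1 - A) = 1 by ring. exact: dchar1 hc.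
  - move=> m n; rewrite /be' -(dcharM hc); apply: (dchar_mod hc).
    have -> : m * n * A + (1 - A) - (m * A + (1 - A)) * (n * A + (1 - A)) =
      (A * (1 - A)) * (m * n - m - n + 1) by ring.
    exact: dvdz_mulr.
  - move=> n; rewrite /be'; apply: (dchar_mod hc).
    have -> : (n + b%:Z) * A + (1 - A) - (n * A + (1 - A)) = x * (a%:Z * b%:Z) by rewrite /A; ring.
    rewrite -eab PoszM; exact: dvdz_mull (dvdzz _).
  - move=> n; rewrite /be' (dchar_neq0 hc) -eab PoszM coprimezMr.
    have -> : coprimez (n * A + (1 - A)) b%:Z = coprimez n b%:Z.
      apply/idP/idP => h; apply: (coprimez_congr h).
      + have -> : n * A + (1 - A) - n = (y * (1 - n)) * b%:Z.
          have -> : y * (1 - n) * b%:Z = (1 - n) * (y * b%:Z) by ring.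
          rewrite eB; ring.
        exact: dvdz_mull (dvdzz _).
      + have -> : n - (n * A + (1 - A)) = (y * (n - 1)) * b%:Z.
          have -> : y * (n - 1) * b%:Z = (n - 1) * (y * b%:Z) by ring.
          rewrite eB; ring.
        exact: dvdz_mull (dvdzz _).
    have -> : coprimez (n * A + (1 - A)) a%:Z.
      apply: coprimez_of1.
      have -> : n * A + (1 - A) - 1 = ((n - 1) * x) * a%:Z by rewrite /A; ring.
      exact: dvdz_mull (dvdzz _).
    by [].
exists al, (fun n => (be' n)^*); split => //.
- exact: conj_dchar.
- move=> n; rewrite conjCK /al /be' -(dcharM hc); apply: (dchar_mod hc).
  have -> : (n * (1 - A) + A) * (n * A + (1 - A)) - n = (A * (1 - A)) * ((n - 1) ^+ 2) by ring.
  exact: dvdz_mulr.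
Qed.

Lemma make_adm (N Nstar f a b : nat) (psi chistar th al be : int -> algC) :
  (0 < N)%N -> (f %| N)%N -> (Nstar %| N)%N -> (gcdn f (N %/ f) %| N %/ Nstar)%N ->
  primitive_dchar Nstar chistar -> induced_by N psi chistar ->
  (a %| N %/ f)%N -> (b %| f)%N -> is_dchar (gcdn f (N %/ f)) th ->
  is_dchar a al -> is_dchar b be -> (forall n, al n * (be n)^* = chistar n) ->
  exists chi1 chi2, admissible N Nstar psi (f, chi1, chi2) /\
    forall n, coprimez n N%:Z -> chi1 n = th n * al n.
Proof.
move=> N0 fN sN hg hstar hind aM bf hth hal hbe hab.
set M := (N %/ f)%N.
have f0 := prim_gt0 N0 fN.
have MN : (M %| N)%N by apply: dvdn_div.
have M0 := prim_gt0 N0 MN.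
set g := gcdn f M.
have gM : (g %| M)%N by apply: dvdn_gcdr.
have gf : (g %| f)%N by apply: dvdn_gcdl.
have g0 : (0 < g)%N by rewrite gcdn_gt0 f0.
have [q1 [chi1 [q1M p1 e1]]] := prim_exists M0 (prod_dchar hth hal gM aM).
have [q2 [chi2 [q2f p2 e2]]] := prim_exists f0 (prod_dchar hth hbe gf bf).
have cM : forall n, coprimez n N%:Z -> coprimez n M%:Z by move=> n; apply: coprimez_dvdr.
have cf : forall n, coprimez n N%:Z -> coprimez n f%:Z by move=> n; apply: coprimez_dvdr.
have E1 : forall n, coprimez n N%:Z -> chi1 n = th n * al n.
  by move=> n cn; rewrite e1 ?cM // cM.
have E2 : forall n, coprimez n N%:Z -> chi2 n = th n * be n.
  by move=> n cn; rewrite e2 ?cf // cf.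
exists chi1, chi2; split => //.
split => //; exists q1, q2; split => //.
exists Nstar, chistar; split => //.
have qN : (q1 * q2 %| N)%N by apply: dvd_qq fN q1M q2f.
have q0 := prim_gt0 N0 qN.
have hrho := mulconj_dchar p1.1 p2.1.
have [r [rho0 [rq prho e3]]] := prim_exists q0 hrho.
have rN : (r %| N)%N := dvdn_trans rq qN.
have agree : forall n, coprimez n N%:Z -> rho0 n = chistar n.
  move=> n cn; rewrite e3; last exact: coprimez_dvdr qN cn.
  rewrite E1 // E2 // rmorphM -hab.
  have nth : th n * (th n)^* = 1.
    apply: (dchar_norm hth g0); apply: coprimez_dvdr cn.
    exact: dvdn_trans gf fN.
  have -> : th n * al n * ((th n)^* * (be n)^*) = (th n * (th n)^*) * (al n * (be n)^*) by ring.
  by rewrite nth mul1r.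
have [_ eq] := prim_unique N0 rN sN prho hstar agree.
move=> n cn; by rewrite -eq -e3.
Qed.

Lemma in_span_scale (V : lmodType algC) (S : V -> Prop) lam v : in_span S v -> in_span S (lam *: v).
Proof.
move=> [l [hl ->]]; exists [seq (lam * p.1, p.2) | p <- l]; split.
- by move=> p /mapP [q hq ->] /=; apply: hl.
- rewrite big_map scaler_sumr; apply: eq_bigr => p _ /=; by rewrite scalerA.
Qed.

Lemma in_span_sum (V : lmodType algC) (S : V -> Prop) n (c : 'I_n -> algC) (W : 'I_n -> V) :
  (forall i, S (W i)) -> in_span S (\sum_(i < n) c i *: W i).
Proof.
move=> hW; exists [seq (c i, W i) | i <- index_enum 'I_n]; split.
- by move=> p /mapP [i _ ->] /=; apply: hW.
- by rewrite big_map.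
Qed.

Theorem theorem8p1
  (N Nstar : nat) (k : int) (psi chistar : int -> algC)
  (HN : (0 < N)%N)
  (Hpsi : is_dchar N psi)
  (Hpar : psi (-1) = (-1) ^ k)
  (HNstar : (Nstar %| N)%N)
  (Hchistar : primitive_dchar Nstar chistar)
  (Hind : induced_by N psi chistar)
  (V : lmodType algC) (E : int * int -> V) (ip : V -> V -> algC)
  (Hip_l : forall (a : algC) (u v w : V), ip (a *: u + v) w = a * ip u w + ip v w)
  (Hip_r : forall (a : algC) (u v w : V), ip w (a *: u + v) = a^* * ip w u + ip w v)
  (HEequiv : forall x y : int * int, coprimez x.1 x.2 -> coprimez y.1 y.2 ->
     singular_cusp N psi x -> cusp_equiv N x y ->
     exists lam : algC, E y = lam *: E x)
  (HEorth : forall x y : int * int, coprimez x.1 x.2 -> coprimez y.1 y.2 ->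
     singular_cusp N psi x -> singular_cusp N psi y -> ~ cusp_equiv N x y ->
     ip (E x) (E y) = 0)
  (HEnorm : forall x : int * int, coprimez x.1 x.2 -> singular_cusp N psi x ->
     ip (E x) (E x) = 1)
  (R : nat -> seq int)
  (HR : forall f : nat, (0 < f)%N -> (f %| N)%N ->
     reps_ok N (gcdn f (N %/ f)) (R f)) :
  let Sing := fun v : V => exists x : int * int,
      [/\ coprimez x.1 x.2, singular_cusp N psi x & v = E x] in
  let Dfam := fun v : V => exists x, admissible N Nstar psi x /\ v = Dser E R x in
  [/\ (forall x, admissible N Nstar psi x -> in_span Sing (Dser E R x)),
      (forall x y, admissible N Nstar psi x -> admissible N Nstar psi y ->
         x <> y -> ip (Dser E R x) (Dser E R y) = 0),
      (forall x, admissible N Nstar psi x -> ip (Dser E R x) (Dser E R x) != 0) &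
      (forall v, Sing v -> in_span Dfam v)].
Proof.
move=> Sing Dfam.
have hstar := Hchistar.1.
have resid : forall f u v, (0 < f)%N -> (f %| N)%N -> u \in R f -> v \in R f ->
    ((gcdn f (N %/ f))%:Z %| v - u)%Z -> u = v.
  move=> f u v f0 fN hu hv h.
  have [_ hun _] := HR f f0 fN.
  apply: (uniq_map_inj hun hu hv) => /=.
  by apply/eqP; rewrite eq_sym eqz_mod_dvd.
have cu : forall f u, (0 < f)%N -> (f %| N)%N -> u \in R f -> coprimez u N%:Z.
  move=> f u f0 fN hu; have [h _ _] := HR f f0 fN; exact: h.
have sing : forall f u, (0 < f)%N -> (f %| N)%N -> (gcdn f (N %/ f) %| N %/ Nstar)%N ->
    u \in R f -> singular_cusp N psi (1, u * f%:Z).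
  move=> f u f0 fN hg hu; apply: (sing_suff HN hstar Hind fN HNstar hg); exact: cu hu.
have Enorm : forall f u, (0 < f)%N -> (f %| N)%N -> (gcdn f (N %/ f) %| N %/ Nstar)%N ->
    u \in R f -> ip (E (1, u * f%:Z)) (E (1, u * f%:Z)) = 1.
  move=> f u f0 fN hg hu; apply: HEnorm; [exact: coprimez1 | exact: sing].
have Eorth_same : forall f u v, (0 < f)%N -> (f %| N)%N -> (gcdn f (N %/ f) %| N %/ Nstar)%N ->
    u \in R f -> v \in R f -> u != v -> ip (E (1, u * f%:Z)) (E (1, v * f%:Z)) = 0.
  move=> f u v f0 fN hg hu hv huv.
  apply: HEorth; [exact: coprimez1 | exact: coprimez1 | exact: sing | exact: sing |] => heq.
  have [_ hd] := equiv_inv HN fN fN (cu _ _ f0 fN hu) (cu _ _ f0 fN hv) heq.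
  by move: huv; rewrite (resid f u v f0 fN hu hv hd) eqxx.
have Eorth_diff : forall f f' u v, (0 < f)%N -> (f %| N)%N -> (gcdn f (N %/ f) %| N %/ Nstar)%N ->
    (0 < f')%N -> (f' %| N)%N -> (gcdn f' (N %/ f') %| N %/ Nstar)%N ->
    u \in R f -> v \in R f' -> f != f' -> ip (E (1, u * f%:Z)) (E (1, v * f'%:Z)) = 0.
  move=> f f' u v f0 fN hg f0' fN' hg' hu hv hff.
  apply: HEorth; [exact: coprimez1 | exact: coprimez1 | exact: sing | exact: sing |] => heq.
  have [ef _] := equiv_inv HN fN fN' (cu _ _ f0 fN hu) (cu _ _ f0' fN' hv) heq.
  by move: hff; rewrite ef eqxx.
split.
-
  move=> [[f c1] c2] [f0 fN hg _].
  exists [seq (c1 (- u), E (1, u * f%:Z)) | u <- R f]; split.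
  + move=> p /mapP [u hu ->] /=; exists (1, u * f%:Z); split => //.
    * exact: coprimez1.
    * exact: sing.
  + by rewrite big_map.
-
  move=> [[f c1] c2] [[f' c1'] c2'] [f0 fN hg [q1 [q2 [h1 h2 p1 p2 sm]]]]
    [f0' fN' hg' [q1' [q2' [h1' h2' p1' p2' sm']]]] hne.
  rewrite /Dser.
  case: (eqVneq f f') => [ef|nf].
  + subst f'.
    have [_ hun _] := HR f f0 fN.
    rewrite (ip_diag Hip_l Hip_r).
    * have hs := HR f f0 fN.
      case: (orth_sum HN fN hs h1 h2 p1 p2 sm h1' h2' p1' p2' sm') => [[e1 e2]|->] //.
      exfalso; apply: hne.
      have -> : c1 = c1' by apply: functional_extensionality.
      have -> : c2 = c2' by apply: functional_extensionality.
      by [].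
    * exact: map_uniq hun.
    * by move=> u hu; apply: Enorm.
    * by move=> u v hu hv huv; apply: Eorth_same.
  + rewrite (ip_sum2 Hip_l Hip_r) big_seq big1 // => u hu.
    rewrite big_seq big1 // => v hv.
    by rewrite (Eorth_diff f f') ?mulr0.
-
  move=> [[f c1] c2] [f0 fN hg [q1 [q2 [h1 h2 p1 p2 sm]]]].
  rewrite /Dser.
  have [_ hun hrep] := HR f f0 fN.
  have us := map_uniq hun.
  rewrite (ip_diag Hip_l Hip_r) //; last first.
    by move=> u v hu hv huv; apply: Eorth_same.
    by move=> u hu; apply: Enorm.
  have [u0 u0R _] := hrep 1 (coprimez1 _).
  have q1N : (q1 %| N)%N by apply: dvdn_trans h1 _; apply: dvdn_div.
  have nz : c1 (- u0) != 0.
    apply: (dchar_neq0N q1N p1.1); rewrite coprimeNz; exact: cu u0R.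
  rewrite (bigD1_seq u0) //=.
  apply: lt0r_neq0.
  apply: (lt_le_trans (y := c1 (- u0) * (c1 (- u0))^*)); first by rewrite mul_conjC_gt0.
  rewrite lerDl; apply: sumr_ge0 => i _; exact: mul_conjC_ge0.
-
  move=> v [[a c] [cac hsing ->]].
  have [f [u0 [f0 fN u0R heq]]] := cusp_rep HN HR cac.
  have hs0 := sing_equiv Hpsi heq hsing.
  have cu0 := cu f u0 f0 fN u0R.
  have hg := sing_nec HN Hpsi Hchistar Hind HNstar fN cu0 hs0.
  have [lam hlam] := HEequiv (1, u0 * f%:Z) (a, c) (coprimez1 _) cac hs0 heq.
  rewrite hlam; apply: in_span_scale.
  have [aa [bb [eab cab aM bf]]] := split_exists HN fN HNstar hg.
  have [al [be [hal hbe hab]]] := alpha_beta eab cab hstar.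
  set g := gcdn f (N %/ f).
  have g0 : (0 < g)%N by rewrite gcdn_gt0 f0.
  have gN : (g %| N)%N by apply: dvdn_trans (dvdn_gcdl _ _) fN.
  have [n [th [hth [horth hdiag]]]] := char_family g0.
  set s := R f.
  have [cs hun hrep] := HR f f0 fN.
  have us := map_uniq hun.
  pose W i := \sum_(u <- s) (th i (- u) * al (- u)) *: E (1, u * f%:Z).
  have hW : forall i, Dfam (W i).
    move=> i.
    have [chi1 [chi2 [hadm E1]]] := make_adm HN fN HNstar hg Hchistar Hind aM bf (hth i) hal hbe hab.
    exists (f, chi1, chi2); split => //.
    rewrite /W /Dser; apply: eq_big_seq => u hu; rewrite E1 //.
    rewrite coprimeNz; exact: cs.
  have cg : forall u, u \in s -> coprimez (- u) g%:Z.
    move=> u hu; rewrite coprimeNz; apply: coprimez_dvdr gN _; exact: cs.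
  set K := \sum_(i < n) th i (- u0) * (th i (- u0))^*.
  have K0 : K != 0 := hdiag _ (cg u0 u0R).
  have aN : (aa %| N)%N by apply: dvdn_trans aM _; apply: dvdn_div.
  have al0 : al (- u0) != 0.
    apply: (dchar_neq0N aN hal); by rewrite coprimeNz.
  have -> : E (1, u0 * f%:Z) = \sum_(i < n) ((th i (- u0))^* / (K * al (- u0))) *: W i.
    symmetry; rewrite /W.
    under eq_bigr do rewrite scaler_sumr.
    rewrite exchange_big /=.
    have inner : forall u, \sum_(i < n) ((th i (- u0))^* / (K * al (- u0))) *:
        ((th i (- u) * al (- u)) *: E (1, u * f%:Z)) =
        ((al (- u) / (K * al (- u0))) * \sum_(i < n) th i (- u) * (th i (- u0))^*) *: E (1, u * f%:Z).
      move=> u; rewrite big_distrr scaler_suml; apply: eq_bigr => i _.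
      rewrite scalerA; congr (_ *: _); rewrite /=; ring.
    rewrite (eq_bigr _ (fun u _ => inner u)).
    rewrite (bigD1_seq u0) //= -/K.
    rewrite big_seq_cond big1 ?addr0.
    + have -> : al (- u0) / (K * al (- u0)) * K = 1.
        by field; apply/andP; split.
      by rewrite scale1r.
    + move=> u /andP [hu hne].
      rewrite horth ?mulr0 ?scale0r //; try exact: cg.
      apply/negP => hd; move/negP: hne; apply.
      apply/eqP; apply: (resid f u u0 f0 fN hu u0R).
      have -> : u0 - u = - u - - u0 by ring.
      exact: hd.
  exact: in_span_sum.
Qed.
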